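(* Let $0<c<1$, let $K=\mathbb{C}(\lambda,\sqrt{1-c^2\lambda})$ and consider the Legendre elliptic curve $L_\lambda: Y^2=X(X-1)(X-\lambda)$ over $K$. Then the point $$B(\lambda)=\left(\frac{(1-c^2)\lambda}{1-c^2\lambda},\ \frac{c\sqrt{1-c^2}\,\lambda(1-\lambda)}{(1-c^2\lambda)\sqrt{1-c^2\lambda}}\right)\in L_\lambda(K)$$ (the billiard section) is not a torsion point of $L_\lambda(K)$.
   Context: This section encodes the billiard map of the elliptical billiard $x^2+y^2/(1-c^2)=1$ (foci $(\pm c,0)$) on the caustic with parameter $s=c^2\lambda$, transported to the Legendre model. *)

(* Defs.v *)
From HB Require Import structures.
From mathcomp Require Import all_boot all_order all_algebra.
From mathcomp Require Import fraction.
From mathcomp Require Import complex.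
From mathcomp Require Import reals.
Set Implicit Arguments. Unset Strict Implicit. Unset Printing Implicit Defensive.
Import Order.TTheory GRing.Theory Num.Theory.
Local Open Scope ring_scope.

(* Points of a Weierstrass curve y^2 = x^3 + a2 x^2 + a4 x + a6 over a field F:
   None is the point at infinity O, Some (x, y) an affine point. *)
Definition ec_point (F : fieldType) := option (F * F).

Definition on_weierstrass (F : fieldType) (a2 a4 a6 : F) (P : ec_point F) : Prop :=
  match P with
  | None => True
  | Some (x, y) => y ^+ 2 = x ^+ 3 + a2 * x ^+ 2 + a4 * x + a6
  end.

(* The chord-tangent group law (valid in characteristic <> 2). *)
Definition ec_add (F : fieldType) (a2 a4 : F) (P Q : ec_point F) : ec_point F :=
  match P, Q with
  | None, _ => Q
  | _, None => P
  | Some (x1, y1), Some (x2, y2) =>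
      if x1 == x2 then
        if y1 == - y2 then None
        else
          let m := (3 * x1 ^+ 2 + 2 * a2 * x1 + a4) / (2 * y1) in
          let x3 := m ^+ 2 - a2 - x1 - x2 in
          Some (x3, - (y1 + m * (x3 - x1)))
      else
        let m := (y2 - y1) / (x2 - x1) in
        let x3 := m ^+ 2 - a2 - x1 - x2 in
        Some (x3, - (y1 + m * (x3 - x1)))
  end.

Definition ec_mul (F : fieldType) (a2 a4 : F) (n : nat) (P : ec_point F) : ec_point F :=
  iter n (ec_add a2 a4 P) None.

Definition ec_torsion (F : fieldType) (a2 a4 : F) (P : ec_point F) : Prop :=
  exists n : nat, (0 < n)%N /\ ec_mul a2 a4 n P = None.

(* The Legendre curve L_lam : Y^2 = X (X - 1) (X - lam)
   = X^3 - (1 + lam) X^2 + lam X. *)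
Definition legendre_on (F : fieldType) (lam : F) (P : ec_point F) : Prop :=
  on_weierstrass (- (1 + lam)) lam 0 P.
Definition legendre_torsion (F : fieldType) (lam : F) (P : ec_point F) : Prop :=
  ec_torsion (- (1 + lam)) lam P.

(* The field K = C(lam, sqrt(1 - c^2 lam)), with C = R[i] for a real field R.
   Put t := sqrt(1 - c^2 lam); then lam = (1 - t^2)/c^2 and K = C(t),
   the rational function field in the indeterminate t. *)
Section BilliardField.
Variable R : realType.
Local Open Scope complex_scope.

Definition Kfield := {fraction {poly R[i]}}.

Definition Kconst (z : R[i]) : Kfield := @FracField.tofrac {poly R[i]} (z%:P).

Definition Kt : Kfield := @FracField.tofrac {poly R[i]} 'X.

Definition Klam (c : R) : Kfield := (1 - Kt ^+ 2) / Kconst ((c ^+ 2)%:C).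

Definition billiardB (c : R) : ec_point Kfield :=
  let lam := Klam c in
  let cc := Kconst (c%:C) in
  let s := Kconst ((Num.sqrt (1 - c ^+ 2))%:C) in
  Some ((1 - cc ^+ 2) * lam / (1 - cc ^+ 2 * lam),
        cc * s * lam * (1 - lam) / ((1 - cc ^+ 2 * lam) * Kt)).
End BilliardField.

(* Main.v *)
Require Import Defs.
From mathcomp Require Import all_boot all_order all_algebra.
From mathcomp Require Import fraction complex reals.
From mathcomp Require Import ring lra.
Import Order.TTheory GRing.Theory Num.Theory.
Local Open Scope ring_scope.
Set Implicit Arguments. Unset Strict Implicit.

Lemma fD (F : fieldType) (P Q P' Q' : F) : Q != 0 -> Q' != 0 ->
  P / Q + P' / Q' = (P * Q' + P' * Q) / (Q * Q').
Proof. by move=> h1 h2; field; rewrite h1 h2. Qed.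
Lemma fM (F : fieldType) (P Q P' Q' : F) : Q != 0 -> Q' != 0 ->
  (P / Q) * (P' / Q') = (P * P') / (Q * Q').
Proof. by move=> h1 h2; field; rewrite h1 h2. Qed.

Lemma cross (F : fieldType) (P Q P' Q' : F) : Q != 0 -> Q' != 0 ->
  P / Q = P' / Q' -> P * Q' = P' * Q.
Proof.
move=> h1 h2 E; apply/eqP; rewrite -subr_eq0.
have -> : P * Q' - P' * Q = (P / Q - P' / Q') * (Q * Q') by field; rewrite h1 h2.
by rewrite E subrr mul0r.
Qed.

Lemma uncross (F : fieldType) (P Q P' Q' : F) : Q != 0 -> Q' != 0 ->
  P * Q' = P' * Q -> P / Q = P' / Q'.
Proof.
move=> h1 h2 E; apply/eqP; rewrite -subr_eq0.
have -> : P / Q - P' / Q' = (P * Q' - P' * Q) / (Q * Q') by field; rewrite h1 h2.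
by rewrite E subrr mul0r.
Qed.


Lemma chord_val (F : fieldType) (a b : F) : a != 0 -> b != 0 -> a + b != 0 ->
  a ^+ 2 - b ^+ 2 != 0 ->
  let M := (- b^-1 ^+ 3 - - a^-1 ^+ 3) / (b^-1 ^+ 2 - a^-1 ^+ 2) in
  let X3 := M ^+ 2 - 0 - a^-1 ^+ 2 - b^-1 ^+ 2 in
  X3 = (a + b)^-1 ^+ 2 /\ - (- a^-1 ^+ 3 + M * (X3 - a^-1 ^+ 2)) = - (a + b)^-1 ^+ 3.
Proof.
move=> ha hb hab h2 M X3.
have hd : b^-1 ^+ 2 - a^-1 ^+ 2 = (a ^+ 2 - b ^+ 2) / (a^+2 * b^+2) by field; rewrite ha hb.
have hM : M = - (a^+2 + a * b + b^+2) / (a * b * (a + b)).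
  rewrite /M hd; field. by rewrite ha hb hab h2.
have hX : X3 = (a + b)^-1 ^+ 2 by rewrite /X3 hM; field; rewrite ha hb hab.
split => //; rewrite hX hM; field; by rewrite ha hb hab.
Qed.

Lemma dbl_val (F : fieldType) (a : F) : a != 0 -> (2 : F) != 0 ->
  let M := (3 * (a^-1 ^+ 2) ^+ 2 + 0 + 0) / (2 * - a^-1 ^+ 3) in
  let X3 := M ^+ 2 - 0 - a^-1 ^+ 2 - a^-1 ^+ 2 in
  X3 = (a + a)^-1 ^+ 2 /\ - (- a^-1 ^+ 3 + M * (X3 - a^-1 ^+ 2)) = - (a + a)^-1 ^+ 3.
Proof.
move=> ha h2 M X3.
have h2' : a + a != 0 by rewrite -mulr2n -mulr_natl mulf_neq0.
have hM : M = - 3 / (2 * a) by rewrite /M; field; rewrite ha h2 oppr_eq0 h2.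
have hX : X3 = (a + a)^-1 ^+ 2.
  by rewrite /X3 hM; field; rewrite h2' ha h2.
split => //; rewrite hX hM; field; by rewrite h2' ha h2.
Qed.
Lemma chord_id (F : fieldType) (t a2 X1 X2 Y1 Y2 : F) : t != 0 -> X2 - X1 != 0 ->
  (Y2 / t ^+ 3 - Y1 / t ^+ 3) / (X2 / t ^+ 2 - X1 / t ^+ 2) = ((Y2 - Y1) / (X2 - X1)) / t.
Proof. by move=> ht hd; field; rewrite ht hd. Qed.

Lemma x3_id (F : fieldType) (t a2 X1 X2 M : F) : t != 0 ->
  (M / t) ^+ 2 - a2 - X1 / t ^+ 2 - X2 / t ^+ 2 = (M ^+ 2 - t ^+ 2 * a2 - X1 - X2) / t ^+ 2.
Proof. by move=> ht; field; rewrite ht. Qed.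

Lemma y3_id (F : fieldType) (t X1 Y1 X3 M : F) : t != 0 ->
  - (Y1 / t ^+ 3 + M / t * (X3 / t ^+ 2 - X1 / t ^+ 2)) = (- (Y1 + M * (X3 - X1))) / t ^+ 3.
Proof. by move=> ht; field; rewrite ht. Qed.

Lemma dbl_id (F : fieldType) (t a2 a4 X Y : F) : t != 0 -> Y != 0 -> (2 : F) != 0 ->
  (3 * (X / t ^+ 2) ^+ 2 + 2 * a2 * (X / t ^+ 2) + a4) / (2 * (Y / t ^+ 3))
  = ((3 * X ^+ 2 + 2 * (t ^+ 2 * a2) * X + t ^+ 4 * a4) / (2 * Y)) / t.
Proof. by move=> ht hY h2; field; rewrite ht hY h2. Qed.


Lemma hT_id (F : fieldType) (cc t : F) : cc != 0 ->
  1 - cc ^+ 2 * ((1 - t ^+ 2) / cc ^+ 2) = t ^+ 2.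
Proof. by move=> hc; field; rewrite hc. Qed.

Lemma curve_id (F : fieldType) (cc S t : F) : cc != 0 -> t != 0 -> S ^+ 2 = 1 - cc ^+ 2 ->
  let lam := (1 - t ^+ 2) / cc ^+ 2 in
  (cc * S * lam * (1 - lam) / ((1 - cc ^+ 2 * lam) * t)) ^+ 2 =
  ((1 - cc ^+ 2) * lam / (1 - cc ^+ 2 * lam)) ^+ 3
  + - (1 + lam) * ((1 - cc ^+ 2) * lam / (1 - cc ^+ 2 * lam)) ^+ 2
  + lam * ((1 - cc ^+ 2) * lam / (1 - cc ^+ 2 * lam)) + 0.
Proof.
move=> hc ht hS lam; rewrite /lam (hT_id t hc).
rewrite expr_div_n !exprMn hS.
field; by rewrite hc ht.
Qed.

Lemma bpt_id (F : fieldType) (cc S t : F) : cc != 0 -> t != 0 ->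
  let lam := (1 - t ^+ 2) / cc ^+ 2 in
  (1 - cc ^+ 2) * lam / (1 - cc ^+ 2 * lam) = (1 - cc ^+ 2) * lam / t ^+ 2 /\
  cc * S * lam * (1 - lam) / ((1 - cc ^+ 2 * lam) * t) = cc * S * lam * (1 - lam) / t ^+ 3.
Proof. by move=> hc ht lam; rewrite /lam (hT_id t hc) -exprSr. Qed.

Lemma valX (F : fieldType) (cC sC : F) : cC != 0 -> sC != 0 -> sC ^+ 2 = 1 - cC ^+ 2 ->
  (1 - cC ^+ 2) * ((1 - 0 ^+ 2) * (cC ^+ 2)^-1) = (cC / sC)^-1 ^+ 2.
Proof. by move=> hc hs E; rewrite -E; field; rewrite hc hs. Qed.

Lemma valY (F : fieldType) (cC sC : F) : cC != 0 -> sC != 0 -> sC ^+ 2 = 1 - cC ^+ 2 ->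
  cC * sC * ((1 - 0 ^+ 2) * (cC ^+ 2)^-1) * (1 - (1 - 0 ^+ 2) * (cC ^+ 2)^-1)
  = - (cC / sC)^-1 ^+ 3.
Proof.
move=> hc hs E; apply/eqP; rewrite -subr_eq0.
have -> : cC * sC * ((1 - 0 ^+ 2) * (cC ^+ 2)^-1) * (1 - (1 - 0 ^+ 2) * (cC ^+ 2)^-1)
  - - (cC / sC)^-1 ^+ 3 = sC / cC ^+ 3 * (sC ^+ 2 - (1 - cC ^+ 2)).
  by field; rewrite hc hs.
by rewrite E subrr mulr0.
Qed.
Section Aux.
Variable R : realType.
Local Notation C := (R[i]).
Local Notation K := (Kfield R).
Local Notation tf := (@FracField.tofrac {poly C}).

Definition hv (f : K) (a : C) := exists p q : {poly C},
  q.[0] != 0 /\ f = tf p / tf q /\ a = p.[0] / q.[0].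

Lemma tf_neq0 {q : {poly C}} : q.[0] != 0 -> tf q != 0.
Proof. move=> h; rewrite tofrac_eq0; apply: contraNneq h => ->; by rewrite horner0. Qed.

Lemma hv_const z : hv (tf z%:P) z.
Proof. exists z%:P, 1; by rewrite !hornerE tofrac1 !divr1 oner_neq0. Qed.

Lemma hv_t : hv (tf 'X) 0.
Proof. exists 'X, 1; by rewrite !hornerE tofrac1 !divr1 oner_neq0. Qed.

Lemma hvD f g a b : hv f a -> hv g b -> hv (f + g) (a + b).
Proof.
move=> [p [q [hq [-> ->]]]] [p' [q' [hq' [-> ->]]]].
exists (p * q' + p' * q), (q * q'); split; first by rewrite hornerM mulf_neq0.
have h1 := tf_neq0 hq; have h2 := tf_neq0 hq'.
split; first by rewrite tofracD !tofracM (@fD _ _ _ _ _ h1 h2).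
by rewrite hornerD !hornerM (@fD _ _ _ _ _ hq hq').
Qed.

Lemma hvM f g a b : hv f a -> hv g b -> hv (f * g) (a * b).
Proof.
move=> [p [q [hq [-> ->]]]] [p' [q' [hq' [-> ->]]]].
exists (p * p'), (q * q'); split; first by rewrite hornerM mulf_neq0.
have h1 := tf_neq0 hq; have h2 := tf_neq0 hq'.
split; first by rewrite !tofracM (@fM _ _ _ _ _ h1 h2).
by rewrite !hornerM (@fM _ _ _ _ _ hq hq').
Qed.

Lemma hvN f a : hv f a -> hv (- f) (- a).
Proof.
move=> [p [q [hq [-> ->]]]].
exists (- p), q; split => //; rewrite tofracN hornerN; split; by rewrite mulNr.
Qed.

Lemma hvB f g a b : hv f a -> hv g b -> hv (f - g) (a - b).
Proof. move=> h1 h2; exact: (hvD h1 (hvN h2)). Qed.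

Lemma hvV f a : a != 0 -> hv f a -> hv (f^-1) (a^-1).
Proof.
move=> ha [p [q [hq [-> Ea]]]].
have hp : p.[0] != 0 by apply: contraNneq ha => hp; rewrite Ea hp mul0r.
exists q, p; split => //; split; last by rewrite Ea invf_div.
by rewrite invf_div.
Qed.

Lemma hv_uniq f a b : hv f a -> hv f b -> a = b.
Proof.
move=> [p [q [hq [-> ->]]]] [p' [q' [hq' [E ->]]]].
have h1 := tf_neq0 hq; have h2 := tf_neq0 hq'.
have : tf (p * q') = tf (p' * q).
  by rewrite !tofracM (cross h1 h2 E).
move/eqP; rewrite tofrac_eq => /eqP /(congr1 (horner^~ 0)); rewrite !hornerM => e.
exact: (uncross hq hq' e).
Qed.


Lemma hv_conv f a b : a = b -> hv f a -> hv f b.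
Proof. by move=> ->. Qed.

Lemma hv_nat n : hv (n%:R) (n%:R).
Proof.
exists n%:R, 1; split; first by rewrite hornerE oner_neq0.
rewrite tofrac1 divr1 rmorph_nat; split => //.
by rewrite hornerMn -polyC1 hornerC divr1.
Qed.

Lemma hv0 : hv 0 0.
Proof. by have := hv_nat 0; rewrite !mulr0n. Qed.

Lemma hv_neq0 f a : a != 0 -> hv f a -> f != 0.
Proof.
move=> ha hf; apply: contraNneq ha => E; rewrite E in hf; apply/eqP; exact: (hv_uniq hf hv0).
Qed.

Lemma Cnat_neq0 n : (0 < n)%N -> (n%:R : C) != 0.
Proof. by move=> hn; rewrite pnatr_eq0 -lt0n. Qed.

Local Notation t := (tf 'X).

Lemma ht : t != 0.
Proof. by rewrite tofrac_eq0 polyX_eq0. Qed.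

Lemma K2 : (2 : K) != 0.
Proof. exact: (hv_neq0 (Cnat_neq0 (isT : (0 < 2)%N)) (hv_nat 2)). Qed.

Definition Inv (Q : ec_point K) (al : C) := al != 0 /\ exists X Y,
  Q = Some (X / t ^+ 2, Y / t ^+ 3) /\ hv X (al^-1 ^+ 2) /\ hv Y (- al^-1 ^+ 3).

Lemma ht2 : t ^+ 2 != 0.
Proof. by rewrite expf_neq0 // ht. Qed.

Lemma divt2_inj X1 X2 : X1 / t ^+ 2 = X2 / t ^+ 2 -> X1 = X2.
Proof. by move/(congr1 ( *%R^~ (t ^+ 2))); rewrite !(divfK ht2). Qed.


Lemma chord_step a2 a4 Q1 Q2 al be : hv (t ^+ 2 * a2) 0 -> Inv Q1 al -> Inv Q2 be ->
  al ^+ 2 - be ^+ 2 != 0 -> al + be != 0 -> Inv (ec_add a2 a4 Q1 Q2) (al + be).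
Proof.
move=> ha [hal [X1 [Y1 [-> [hX1 hY1]]]]] [hbe [X2 [Y2 [-> [hX2 hY2]]]]] h2 hab.
have hd : be^-1 ^+ 2 - al^-1 ^+ 2 != 0.
  apply: contra h2; rewrite !subr_eq0 => /eqP E; apply/eqP.
  by apply: invr_inj; rewrite -!exprVn E.
rewrite /ec_add; case: eqP => [E|NE].
  have E' := divt2_inj E; rewrite E' in hX1.
  by rewrite (hv_uniq hX1 hX2) subrr eqxx in hd.
have hXd : X2 - X1 != 0.
  apply/eqP => e; apply: NE; have -> : X2 = X1 by apply/eqP; rewrite -subr_eq0 e.
  done.
rewrite (@chord_id _ t a2 X1 X2 Y1 Y2 ht hXd).
set M := (Y2 - Y1) / (X2 - X1).
rewrite (@x3_id _ t a2 X1 X2 M ht).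
set X3 := M ^+ 2 - t ^+ 2 * a2 - X1 - X2.
rewrite (@y3_id _ t X1 Y1 (X3) M ht).
split; first by [].
exists X3, (- (Y1 + M * (X3 - X1))); split; first by [].
have hM := hvM (hvB hY2 hY1) (hvV hd (hvB hX2 hX1)).
have hX3 := hvB (hvB (hvB (hvM hM hM) ha) hX1) hX2.
have hY3 := hvN (hvD hY1 (hvM hM (hvB hX3 hX1))).
have [v1 v2] := chord_val hal hbe hab h2.
rewrite /X3 [M ^+ 2]expr2; split.
  apply: (hv_conv _ hX3); by rewrite -v1 expr2.
apply: (hv_conv _ hY3); by rewrite -v2 expr2.
Qed.


Lemma xneg (F : fieldType) (x : F) : (2 : F) != 0 -> x = - x -> x = 0.
Proof.
move=> h2 E; have : x * 2 = 0 by rewrite mulr_natr mulr2n {1}E addNr.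
by move/eqP; rewrite mulf_eq0 (negbTE h2) orbF => /eqP.
Qed.

Lemma dbl_step a2 a4 Q al : hv (t ^+ 2 * a2) 0 -> hv (t ^+ 4 * a4) 0 -> Inv Q al ->
  Inv (ec_add a2 a4 Q Q) (al + al).
Proof.
move=> ha ha4 [hal [X [Y [-> [hX hY]]]]].
have hC2 : (2 : C) != 0 := Cnat_neq0 (isT : (0 < 2)%N).
have hYv : - al^-1 ^+ 3 != 0 by rewrite oppr_eq0 expf_neq0 // invr_eq0.
have hYn : Y != 0 := hv_neq0 hYv hY.
rewrite /ec_add eqxx; case: eqP => [E|_].
  have := xneg K2 E; move/eqP; rewrite mulf_eq0 invr_eq0 (negbTE hYn) /=.
  by rewrite expf_eq0 /= (negbTE ht).
rewrite (@dbl_id _ t a2 a4 X Y ht hYn K2).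
set M := (3 * X ^+ 2 + 2 * (t ^+ 2 * a2) * X + t ^+ 4 * a4) / (2 * Y).
rewrite (@x3_id _ t a2 X X M ht).
set X3 := M ^+ 2 - t ^+ 2 * a2 - X - X.
rewrite (@y3_id _ t X Y (X3) M ht).
have hal2 : al + al != 0 by rewrite -mulr2n -mulr_natr mulf_neq0.
split; first by [].
exists X3, (- (Y + M * (X3 - X))); split; first by [].
have hM : hv M ((3 * (al^-1 ^+ 2) ^+ 2 + 0 + 0) / (2 * - al^-1 ^+ 3)).
  rewrite /M [X ^+ 2]expr2.
  have h := hvM (hvD (hvD (hvM (hv_nat 3) (hvM hX hX)) (hvM (hvM (hv_nat 2) ha) hX)) ha4)
    (hvV (mulf_neq0 hC2 hYv) (hvM (hv_nat 2) hY)).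
  apply: (hv_conv _ h); by rewrite expr2 mulr0 mul0r.
have hX3 := hvB (hvB (hvB (hvM hM hM) ha) hX) hX.
have hY3 := hvN (hvD hY (hvM hM (hvB hX3 hX))).
have [v1 v2] := dbl_val hal hC2.
rewrite /X3 [M ^+ 2]expr2; split.
  apply: (hv_conv _ hX3); by rewrite -v1 expr2.
apply: (hv_conv _ hY3); by rewrite -v2 expr2.
Qed.


Lemma Inv_conv Q a b : a = b -> Inv Q a -> Inv Q b.
Proof. by move=> ->. Qed.

Lemma Inv_Some Q a : Inv Q a -> Q <> None.
Proof. by case=> _ [X [Y [-> _]]]. Qed.

Lemma ec_mul1 a2 a4 (P : ec_point K) : ec_mul a2 a4 1 P = P.
Proof. by case: P => [[x y]|]. Qed.

Lemma mul_inv a2 a4 P al : hv (t ^+ 2 * a2) 0 -> hv (t ^+ 4 * a4) 0 -> Inv P al ->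
  forall n, (0 < n)%N -> Inv (ec_mul a2 a4 n P) (n%:R * al).
Proof.
move=> ha ha4 hP; elim=> [//|n IH] _.
case: n IH => [|n] IH; first by rewrite ec_mul1 mul1r.
have IHn := IH isT.
have hal : al != 0 by case: hP.
have -> : ec_mul a2 a4 n.+2 P = ec_add a2 a4 P (ec_mul a2 a4 n.+1 P) by [].
have e : n.+2%:R * al = al + n.+1%:R * al by rewrite -natr1 mulrDl mul1r addrC.
apply: (Inv_conv (esym e)).
case: n IH IHn e => [|n] IH IHn e.
  rewrite ec_mul1 mul1r; exact: (dbl_step ha ha4 hP).
apply: (@chord_step a2 a4 _ _ _ _ ha hP IHn).
  rewrite exprMn -{1}(mul1r (al ^+ 2)) -mulrBl mulf_neq0 ?expf_neq0 //.
  rewrite subr_eq0 eq_sym -natrX -(mulr1n 1) eqr_nat; by [].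
rewrite -{1}(mul1r al) -mulrDl addrC natr1 mulf_neq0 //.
exact: (Cnat_neq0 (isT : (0 < n.+3)%N)).
Qed.

Lemma not_torsion a2 a4 P al : hv (t ^+ 2 * a2) 0 -> hv (t ^+ 4 * a4) 0 -> Inv P al ->
  ~ ec_torsion a2 a4 P.
Proof.
move=> ha ha4 hP [n [hn E]].
exact: (Inv_Some (mul_inv ha ha4 hP hn) E).
Qed.


Lemma hv1 : hv 1 1.
Proof. by have := hv_nat 1; rewrite !mulr1n. Qed.

Lemma hvX f a n : hv f a -> hv (f ^+ n) (a ^+ n).
Proof.
move=> h; elim: n => [|n IH]; first by rewrite !expr0; exact: hv1.
rewrite !exprS; exact: (hvM h IH).
Qed.

Lemma KconstX (z : C) n : Kconst (z ^+ n) = Kconst z ^+ n.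
Proof. by rewrite /Kconst !rmorphXn. Qed.

Lemma KconstB (z w : C) : Kconst (z - w) = Kconst z - Kconst w.
Proof. by rewrite /Kconst !rmorphB. Qed.

Lemma Kconst1 : Kconst (1 : C) = 1.
Proof. by rewrite /Kconst !rmorph1. Qed.

Lemma billiard_main (c : R) : 0 < c -> c < 1 ->
  legendre_on (Klam c) (billiardB c) /\ ~ legendre_torsion (Klam c) (billiardB c).
Proof.
move=> hc0 hc1.
have hs0 : 0 < 1 - c ^+ 2 by nra.
set s := Num.sqrt (1 - c ^+ 2).
have hs : s ^+ 2 = 1 - c ^+ 2 := sqr_sqrtr (ltW hs0).
have hsp : 0 < s by rewrite sqrtr_gt0.
set cC : C := (c%:C)%C.
set sC : C := (s%:C)%C.
have hcC : cC != 0 by rewrite /cC fmorph_eq0 gt_eqF.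
have hsC : sC != 0 by rewrite /sC fmorph_eq0 gt_eqF.
have hsC2 : sC ^+ 2 = 1 - cC ^+ 2 by rewrite /sC /cC -rmorphXn hs rmorphB rmorph1 rmorphXn.
set cc := Kconst cC.
set S := Kconst sC.
have hD : Kconst (((c ^+ 2)%:C)%C) = cc ^+ 2 by rewrite rmorphXn KconstX.
have hS : S ^+ 2 = 1 - cc ^+ 2 by rewrite /S -KconstX hsC2 KconstB Kconst1 KconstX.
have hccv : hv cc cC := hv_const cC.
have hSv : hv S sC := hv_const sC.
have hcc : cc != 0 := hv_neq0 hcC hccv.
have hlam : Klam c = (1 - t ^+ 2) / cc ^+ 2 by rewrite /Klam /Kt hD.
have hB : billiardB c = Some ((1 - cc ^+ 2) * ((1 - t ^+ 2) / cc ^+ 2)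
     / (1 - cc ^+ 2 * ((1 - t ^+ 2) / cc ^+ 2)),
   cc * S * ((1 - t ^+ 2) / cc ^+ 2) * (1 - ((1 - t ^+ 2) / cc ^+ 2))
     / ((1 - cc ^+ 2 * ((1 - t ^+ 2) / cc ^+ 2)) * t)).
  by rewrite /billiardB hlam.
rewrite hlam hB; split.
  exact: (curve_id hcc ht hS).
have hlamv : hv ((1 - t ^+ 2) / cc ^+ 2) ((1 - 0 ^+ 2) * (cC ^+ 2)^-1).
  exact: (hvM (hvB hv1 (hvX 2 hv_t)) (hvV (expf_neq0 2 hcC) (hvX 2 hccv))).
have ha : hv (t ^+ 2 * - (1 + (1 - t ^+ 2) / cc ^+ 2)) 0.
  apply: (hv_conv _ (hvM (hvX 2 hv_t) (hvN (hvD hv1 hlamv)))).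
  by rewrite expr0n /= mul0r.
have ha4 : hv (t ^+ 4 * ((1 - t ^+ 2) / cc ^+ 2)) 0.
  apply: (hv_conv _ (hvM (hvX 4 hv_t) hlamv)).
  by rewrite [0 ^+ 4]expr0n /= mul0r.
apply: (not_torsion (al := cC / sC) ha ha4).
split; first by rewrite mulf_neq0 // invr_eq0.
have [e1 e2] := bpt_id S hcc ht.
rewrite e1 e2.
exists ((1 - cc ^+ 2) * ((1 - t ^+ 2) / cc ^+ 2)),
  (cc * S * ((1 - t ^+ 2) / cc ^+ 2) * (1 - ((1 - t ^+ 2) / cc ^+ 2))).
split; first by [].
split.
  apply: (hv_conv _ (hvM (hvB hv1 (hvX 2 hccv)) hlamv)).
  exact: (valX hcC hsC hsC2).
apply: (hv_conv _ (hvM (hvM (hvM hccv hSv) hlamv) (hvB hv1 hlamv))).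
exact: (valY hcC hsC hsC2).
Qed.

End Aux.

Unset Implicit Arguments.

Theorem proposition2p1 (R : realType) (c : R) (hc0 : 0 < c) (hc1 : c < 1) :
  legendre_on (Klam c) (billiardB c) /\ ~ legendre_torsion (Klam c) (billiardB c).
Proof. exact: (billiard_main hc0 hc1). Qed.
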